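(* Let $(X,d)$ be a metric space, let $P\subseteq X$ be a finite set of terminals, and let $P_1,\dots,P_k$ be a partition of $P$ into nonempty sets. Suppose $\mathcal{A}$ is an $\alpha$-factor approximation algorithm for the minimum Steiner tree problem in $(X,d)$ (for every finite $S\subseteq X$ it outputs a Steiner tree for $S$ of length at most $\alpha$ times the minimum length of a Steiner tree for $S$). Consider the following ''simple bottom-up'' algorithm: for each $i=1,\dots,k$ compute $T_i:=\mathcal{A}(P_i)$, choose an arbitrary connection point $q_i\in P_i$, compute $T_{top}:=\mathcal{A}(\{q_1,\dots,q_k\})$, and return $T=(T_{top},T_1,\dots,T_k)$. Then $T$ is a two-level Steiner tree for $P_1,\dots,P_k$ and $$l(T)\le 2\alpha\cdot l(T^{\star}),$$ where $T^{\star}$ is a minimum-length two-level Steiner tree for $P_1,\dots,P_k$.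
   Context: A Steiner tree for a finite set $S\subseteq X$ is a finite tree whose vertex set is a subset of $X$ containing $S$; its length $l(\cdot)$ is the sum of $d(x,y)$ over its edges $\{x,y\}$. A two-level Steiner tree for $P_1,\dots,P_k$ is a tuple $T=(T_{top},T_1,\dots,T_k)$ where each $T_i$ is a Steiner tree for $P_i$ and $T_{top}$ is a Steiner tree such that for every $i$ there is a point $q_i$ that is a vertex of both $T_{top}$ and $T_i$ (so $T_{top}$ is a Steiner tree for $\{q_1,\dots,q_k\}$ and $T_i$ a Steiner tree for $P_i\cup\{q_i\}$). Its length is $l(T)=l(T_{top})+\sum_{i=1}^k l(T_i)$. *)

(* Defs.v *)
From HB Require Import structures.
From mathcomp Require Import all_boot all_order all_algebra.
From mathcomp Require Import finmap.
Set Implicit Arguments. Unset Strict Implicit. Unset Printing Implicit Defensive.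
Import Order.TTheory GRing.Theory Num.Theory.
Local Open Scope fset_scope.
Local Open Scope ring_scope.

Definition is_metric (R : realFieldType) (X : Type) (d : X -> X -> R) : Prop :=
  [/\ forall x y, 0 <= d x y,
      forall x y, d x y = 0 <-> x = y,
      forall x y, d x y = d y x &
      forall x y z, d x z <= d x y + d y z].

(* A finite graph with vertices in X: a finite vertex set and a list of edges,
   each edge (x,y) standing for the unordered edge {x,y}. *)
Record graph (X : choiceType) := Graph { verts : {fset X}; edges : seq (X * X) }.

Definition adj (X : choiceType) (G : graph X) (x y : X) : bool :=
  ((x, y) \in edges G) || ((y, x) \in edges G).

Definition simple_graph (X : choiceType) (G : graph X) : Prop :=
  [/\ forall e, e \in edges G -> [/\ e.1 \in verts G, e.2 \in verts G & e.1 != e.2]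
    & uniq [seq [fset e.1; e.2] | e <- edges G]].

Definition connected_graph (X : choiceType) (G : graph X) : Prop :=
  forall x y, x \in verts G -> y \in verts G ->
    exists p : seq X, path (adj G) x p /\ last x p = y.

Definition has_cycle (X : choiceType) (G : graph X) : Prop :=
  exists c : seq X, [/\ 3 <= size c, uniq c & cycle (adj G) c]%N.

Definition is_tree (X : choiceType) (G : graph X) : Prop :=
  [/\ verts G != fset0, simple_graph G, connected_graph G & ~ has_cycle G].

Definition steiner_tree (X : choiceType) (G : graph X) (S : {fset X}) : Prop :=
  is_tree G /\ S `<=` verts G.

Definition glength (R : realFieldType) (X : choiceType) (d : X -> X -> R)
  (G : graph X) : R := \sum_(e <- edges G) d e.1 e.2.

Definition two_level (X : choiceType) (k : nat) (P : 'I_k -> {fset X})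
  (Ttop : graph X) (T : 'I_k -> graph X) : Prop :=
  is_tree Ttop /\
  exists q : 'I_k -> X, forall i,
    [/\ q i \in verts Ttop, q i \in verts (T i) & steiner_tree (T i) (P i)].

Definition two_level_length (R : realFieldType) (X : choiceType) (d : X -> X -> R)
  (k : nat) (Ttop : graph X) (T : 'I_k -> graph X) : R :=
  glength d Ttop + \sum_(i < k) glength d (T i).

Definition approx_alg (R : realFieldType) (X : choiceType) (d : X -> X -> R)
  (alpha : R) (A : {fset X} -> graph X) : Prop :=
  forall S : {fset X}, steiner_tree (A S) S /\
    forall T', steiner_tree T' S -> glength d (A S) <= alpha * glength d T'.

(* Main.v *)
Require Import Defs.
From HB Require Import structures.
From mathcomp Require Import all_boot all_order all_algebra.
From mathcomp Require Import finmap.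
Import Order.TTheory GRing.Theory Num.Theory.
Local Open Scope fset_scope.
From mathcomp Require Import ring lra.

Lemma adjC (X : choiceType) (G : graph X) x y : adj G x y = adj G y x.
Proof. by rewrite /adj orbC. Qed.

Lemma adj_sub (X : choiceType) (G1 G2 : graph X) :
  {subset edges G1 <= edges G2} -> forall x y, adj G1 x y -> adj G2 x y.
Proof. by move=> s x y /orP[/s h|/s h]; rewrite /adj h ?orbT. Qed.

Lemma leaf (X : choiceType) (W : {fset X}) E u v e :
  is_tree (Graph W E) -> u \in W -> v \notin W -> (e = (u,v) \/ e = (v,u)) ->
  is_tree (Graph (v |` W) (e :: E)).
Proof.
move=> [Wn0 [Hs Hu] Hc Hnc] uW vW He.
have uv : u != v by apply: contraNneq vW => <-.
have adjE : forall x y, adj (Graph (v |` W) (e::E)) x y =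
   ((x == u) && (y == v)) || ((x == v) && (y == u)) || adj (Graph W E) x y.
  move=> x y; rewrite /adj /= !in_cons; case: He => ->; rewrite !xpair_eqE;
  by case: (x == u); case: (y == v); case: (x == v); case: (y == u);
     case: ((x,y) \in E); case: ((y,x) \in E).
have oldE : forall e', e' \in E -> e'.1 \in W /\ e'.2 \in W.
  by move=> e' /Hs [].
have adjold : forall x y, adj (Graph W E) x y -> x \in W /\ y \in W.
  by rewrite /adj => x y /orP [] /oldE /= [].
have sub : forall x y, adj (Graph W E) x y -> adj (Graph (v |` W) (e :: E)) x y.
  by move=> x y; rewrite adjE => ->; rewrite orbT.
have nbv : forall y, adj (Graph (v |` W) (e :: E)) v y -> y = u.
  move=> y; rewrite adjE eqxx [v == u]eq_sym (negbTE uv) /=.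
  case/orP => [/eqP //| /adjold [] h]; by rewrite h in vW.
split.
- by apply/fset0Pn; exists v; rewrite fset1U1.
- split.
  + move=> e'; rewrite in_cons => /orP [/eqP -> | e'E].
      by case: He => -> /=; rewrite !in_fset1U eqxx uW ?orbT //= eq_sym.
    have [h1 h2] := oldE _ e'E; have [_ _ h3] := Hs _ e'E.
    by rewrite /= !in_fset1U h1 h2 !orbT.
  + rewrite /= Hu andbT; apply/mapP => [[e' e'E Heq]].
    have [h1 h2] := oldE _ e'E.
    have : v \in [fset e.1; e.2] by case: He => ->; rewrite !inE eqxx ?orbT.
    rewrite Heq !inE => /orP [/eqP hv|/eqP hv]; rewrite hv ?h1 ?h2 in vW; by [].
- move=> x y; rewrite !in_fset1U => /orP[/eqP->|xW] /orP[/eqP->|yW].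
  + by exists [::].
  + have [p [pp lp]] := Hc u y uW yW.
    exists (u :: p); split => //=; rewrite adjE eqxx eqxx orbT /=.
    exact: sub_path sub _ _ pp.
  + have [p [pp lp]] := Hc x u xW uW.
    exists (rcons p v); rewrite last_rcons rcons_path; split => //.
    rewrite (sub_path sub pp) lp /= adjE eqxx eqxx /=. by [].
  + have [p [pp lp]] := Hc x y xW yW.
    by exists p; split => //; exact: sub_path sub _ _ pp.
- move=> [c [c3 cu cc]].
  case vc: (v \in c).
  + have [i s' Hr] := rot_to vc.
    have cc' : cycle (adj (Graph (v |` W) (e :: E))) (v :: s') by rewrite -Hr rot_cycle.
    have cu' : uniq (v :: s') by rewrite -Hr rot_uniq.
    have c3' : (3 <= size (v :: s'))%N by rewrite -Hr size_rot.
    case: s' cc' cu' c3' Hr => [|y s'']; first by [].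
    move=> cc' cu' c3' _.
    move: cc'; rewrite /= rcons_path => /andP [h1 /andP [_ h2]].
    have yu := nbv _ h1; rewrite adjC in h2; have lu := nbv _ h2.
    subst y; move: h2; case: s'' c3' cu' lu => [|z t]; first by [].
    move=> _ /= /andP [_ /andP [ut _]] lu _.
    by move: (mem_last z t); rewrite lu (negbTE ut).
  + apply: Hnc; exists c; split => //.
    apply: (sub_in_cycle (P := predC1 v)) cc.
      move=> x y /= xv yv; rewrite adjE (negbTE xv) (negbTE yv) andbF /=. by [].
    by apply/allP => x xc /=; apply/eqP => xv; rewrite -xv xc in vc.
Qed.

Lemma step (X : choiceType) (GE : seq (X * X)) (V : {fset X}) (T : graph X) :
  (forall e, e \in GE -> e.1 \in V /\ e.2 \in V) ->
  is_tree T -> verts T `<=` V -> uniq (edges T) -> {subset edges T <= GE} ->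
  has (fun e => (e.1 \in verts T) != (e.2 \in verts T)) GE ->
  exists T2, [/\ is_tree T2, verts T `<=` verts T2, verts T2 `<=` V,
     uniq (edges T2) /\ {subset edges T2 <= GE} &
     (#|` V `\` verts T2| < #|` V `\` verts T|)%N].
Proof.
case: T => W E /= HV HT HWV Hu Hs /hasP [[a b] abG /= hab].
have [_ [Hsimp _] _ _] := HT.
have oldE : forall e', e' \in E -> e'.1 \in W /\ e'.2 \in W.
  by move=> e' /Hsimp [].
have [aV bV] := HV _ abG.
have gen : forall u v e, u \in W -> v \notin W -> v \in V -> (e = (u,v) \/ e = (v,u)) ->
   e \in GE -> exists T2, [/\ is_tree T2, W `<=` verts T2, verts T2 `<=` V,
     uniq (edges T2) /\ {subset edges T2 <= GE} &
     (#|` V `\` verts T2| < #|` V `\` W|)%N].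
  move=> u v e uW vW vV He eG.
  exists (Graph (v |` W) (e :: E)); split => /=.
  - exact: (leaf _ _ _ _ _ _ HT uW) vW He.
  - exact: fsubsetU1.
  - by rewrite fsubUset fsub1set vV HWV.
  - split; last by move=> x; rewrite in_cons => /orP [/eqP ->|/Hs].
    rewrite Hu andbT; apply/negP => /oldE [h1 h2].
    by case: He h1 h2 => -> /= h1 h2; [rewrite h2 in vW | rewrite h1 in vW].
  - have -> : V `\` (v |` W) = (V `\` W) `\ v by rewrite fsetDDl fsetUC.
    rewrite [Z in (_ < Z)%N](cardfsD1 v) in_fsetD vW vV /=.
    by rewrite add1n ltnS leqnn.
case aW: (a \in W) hab => /= hab.
- have bW : b \notin W by move: hab; case: (b \in W).
  exact: (gen a b) (a,b) aW bW bV (or_introl erefl) abG.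
- have bW : b \in W by move: hab; case: (b \in W).
  exact: (gen b a) (a,b) bW (negbT aW) aV (or_intror erefl) abG.
Qed.

Lemma grow (X : choiceType) (GE : seq (X * X)) (V : {fset X}) :
  (forall e, e \in GE -> e.1 \in V /\ e.2 \in V) ->
  forall n (T : graph X), (#|` V `\` verts T| <= n)%N ->
  is_tree T -> verts T `<=` V -> uniq (edges T) -> {subset edges T <= GE} ->
  exists T', [/\ is_tree T', verts T `<=` verts T', uniq (edges T'),
     {subset edges T' <= GE} &
     forall e, e \in GE -> (e.1 \in verts T') = (e.2 \in verts T')].
Proof.
move=> HV; elim=> [|n IH] T Hn HT HWV Hu Hs.
- case: (boolP (has (fun e => (e.1 \in verts T) != (e.2 \in verts T)) GE)) => Hh.
    have [T2 [_ _ _ _ H]] := step _ _ _ _ HV HT HWV Hu Hs Hh.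
    by move: (leq_trans H Hn).
  exists T; split => // e eG; apply/eqP; move/hasPn: Hh => /(_ e eG).
  by rewrite negbK.
- case: (boolP (has (fun e => (e.1 \in verts T) != (e.2 \in verts T)) GE)) => Hh.
    have [T2 [H1 H2 H3 [H4 H5] H6]] := step _ _ _ _ HV HT HWV Hu Hs Hh.
    have [T3 [G1 G2 G3 G4 G5]] := IH T2 (leq_trans H6 Hn) H1 H3 H4 H5.
    exists T3; split => //; exact: fsubset_trans H2 G2.
  exists T; split => // e eG; apply/eqP; move/hasPn: Hh => /(_ e eG).
  by rewrite negbK.
Qed.

Lemma sum_sub (R : numDomainType) (T : eqType) (f : T -> R) (s t : seq T) :
  uniq s -> {subset s <= t} -> (forall x, (0 <= f x)%R) ->
  (\sum_(x <- s) f x <= \sum_(x <- t) f x)%R.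
Proof.
elim: t s => [|y t IH] s us st f0.
  case: s us st => [|x s] _ st; first by rewrite !big_nil.
  by have := st x (mem_head _ _).
case ys: (y \in s).
  rewrite (perm_big _ (perm_to_rem ys)) !big_cons lerD2l.
  apply: IH => //; first exact: rem_uniq.
  move=> x; rewrite (mem_rem_uniq _ us) => /andP [xy /st].
  by rewrite in_cons (negbTE xy).
rewrite big_cons; apply: le_trans (IH s us _ f0) _.
  by move=> x xs; have := st x xs; rewrite in_cons => /orP [/eqP xy|//]; rewrite -xy xs in ys.
by rewrite lerDr.
Qed.

Lemma tree1 (X : choiceType) (r : X) : is_tree (Graph [fset r] [::]).
Proof.
split => /=.
- by apply/fset0Pn; exists r; rewrite inE.
- by split.
- move=> x y; rewrite !inE => /eqP -> /eqP ->; by exists [::].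
- by move=> [[|x [|y c]] [c3 _ cc]] //=; move: cc; rewrite /= /adj.
Qed.

Local Open Scope ring_scope.

Theorem theorem1 (R : realFieldType) (X : choiceType) (d : X -> X -> R)
  (Pall : {fset X}) (k : nat) (P : 'I_k -> {fset X})
  (alpha : R) (A : {fset X} -> graph X) (q : 'I_k -> X) :
  is_metric d ->
  (forall i, P i != fset0) ->
  (forall i j, i != j -> [disjoint P i & P j]) ->
  (forall x, x \in Pall <-> exists i, x \in P i) ->
  approx_alg d alpha A ->
  (forall i, q i \in P i) ->
  two_level P (A [fset q i | i : 'I_k]) (fun i => A (P i)) /\
  forall (Ttop' : graph X) (T' : 'I_k -> graph X),
    two_level P Ttop' T' ->
    two_level_length d (A [fset q i | i : 'I_k]) (fun i => A (P i))
      <= 2 * alpha * two_level_length d Ttop' T'.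
Proof.
move=> Hm Pn0 Pdis HPall HA Hq.
set Q := [fset q i | i : 'I_k].
have Hd0 : forall x y, 0 <= d x y by case: Hm.
have gl0 : forall G, 0 <= glength d G by move=> G; apply: sumr_ge0 => e _; apply: Hd0.
have qQ : forall i, q i \in Q by move=> i; apply/imfsetP; exists i.
split.
  have [[HT HQ] _] := HA Q; split => //; exists q => i.
  have [[HTi HPi] _] := HA (P i); split => //.
  - exact: (fsubsetP HQ).
  - exact: (fsubsetP HPi).
move=> Ttop' T' [HTt [q' Hq']].
have HTi i : steiner_tree (T' i) (P i) by have [] := Hq' i.
rewrite /two_level_length.
have B1 : \sum_(i<k) glength d (A (P i)) <= alpha * \sum_(i<k) glength d (T' i).
  rewrite mulr_sumr; apply: ler_sum => i _; exact: (HA (P i)).2 _ (HTi i).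
have [r rT] : exists r, r \in verts Ttop' by apply/fset0Pn; case: HTt.
set GE := edges Ttop' ++ flatten [seq edges (T' i) | i <- index_enum 'I_k].
set V := r |` seq_fset tt (map fst GE ++ map snd GE).
have HV : forall e, e \in GE -> e.1 \in V /\ e.2 \in V.
  move=> e eG; rewrite !in_fset1U !seq_fsetE !mem_cat.
  by rewrite (map_f fst eG) (map_f snd eG) !orbT.
have h0 : verts (Graph [fset r] [::]) `<=` V by rewrite /= fsub1set fset1U1.
have h0' : {subset edges (Graph [fset r] [::]) <= GE} by [].
have [S [HS Hsub Su SGE Scl]] := grow _ _ _ HV _ (Graph [fset r] [::]) (leqnn _)
  (tree1 _ r) h0 is_true_true h0'.
have rS : r \in verts S by apply: (fsubsetP Hsub); rewrite /= inE.
have clos : forall x p, x \in verts S -> path (adj (Graph V GE)) x p -> last x p \in verts S.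
  move=> x p; elim: p x => //= y p IH x xS /andP [hxy hp]; apply: IH => //.
  by move: hxy => /orP [h|h]; have /= Eq := Scl _ h; [rewrite -Eq | rewrite Eq].
have subT : forall x y, adj Ttop' x y -> adj (Graph V GE) x y.
  by apply: adj_sub => e eT /=; rewrite mem_cat eT.
have subTi : forall i x y, adj (T' i) x y -> adj (Graph V GE) x y.
  move=> i; apply: adj_sub => e eT /=; rewrite mem_cat; apply/orP; right.
  apply/flattenP; exists (edges (T' i)) => //; apply: map_f; exact: mem_index_enum.
have qS : forall i, q i \in verts S.
  move=> i; have [q'T q'Ti [[_ _ HCi _] HPi]] := Hq' i.
  have [_ _ HC _] := HTt.
  have [p [pp lp]] := HC r (q' i) rT q'T.
  have q'S : q' i \in verts S by rewrite -lp; apply: clos rS (sub_path subT pp).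
  have qTi : q i \in verts (T' i) by apply: (fsubsetP HPi).
  have [p2 [pp2 lp2]] := HCi _ _ q'Ti qTi.
  by rewrite -lp2; apply: clos q'S (sub_path (subTi i) pp2).
have HSQ : steiner_tree S Q.
  split => //; apply/fsubsetP => x /imfsetP [i _ ->]; exact: qS.
have LS : glength d S <= glength d Ttop' + \sum_(i<k) glength d (T' i).
  apply: le_trans (sum_sub _ _ (fun e => d e.1 e.2) _ GE Su SGE (fun e => Hd0 _ _)) _.
  rewrite big_cat big_flatten /= big_map /glength. by [].
have B2 : glength d (A Q) <= alpha * glength d S := (HA Q).2 _ HSQ.
have HT0 : steiner_tree Ttop' fset0 by split => //; exact: fsub0set.
have B3 : glength d (A fset0) <= alpha * glength d Ttop' := (HA fset0).2 _ HT0.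
have s0 : 0 <= \sum_(i<k) glength d (T' i) by apply: sumr_ge0 => i _.
have b0 : 0 <= \sum_(i<k) glength d (A (P i)) by apply: sumr_ge0 => i _.
move: (gl0 (A Q)) (gl0 (A fset0)) (gl0 S) (gl0 Ttop') B1 B2 B3 LS s0 b0.
set a := glength d (A Q); set c := glength d (A fset0); set L := glength d S.
set t := glength d Ttop'; set s := \sum_(i<k) glength d (T' i).
set b := \sum_(i<k) glength d (A (P i)).
move=> a0 c0 L0 t0 B1 B2 B3 LS s0 b0.
case: (lerP 0 alpha) => ha.
  have h1 : alpha * L <= alpha * (t + s) by apply: ler_wpM2l.
  have h2 : alpha * s <= alpha * (t + s) by apply: ler_wpM2l => //; lra.
  lra.
have h1 : alpha * L <= 0 by apply: mulr_le0_ge0 => //; lra.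
have h2 : alpha * s <= 0 by apply: mulr_le0_ge0 => //; lra.
have h3 : alpha * t <= 0 by apply: mulr_le0_ge0 => //; lra.
have -> : 2 * alpha * (t + s) = 2 * (alpha * t) + 2 * (alpha * s) by ring.
lra.
Qed.
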